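(* Let $G=(V,E)$ be a finite graph satisfying the $CD\psi(n,-K)$ condition for some $n>0$, $K>0$, where $\psi:(0,+\infty)\to\mathbb R$ is a concave $C^1$ function with $\psi>0$ and $\psi'>0$ (and $\psi(1)D_w$ in the image of $\psi$). Let $u$ be a positive solution of the heat equation $\partial_t u=\Delta u$ on $V$. Then for all vertices and all $t>0$, $$\Gamma^{\psi}(u)-\psi'(1)\frac{\partial_{t}u}{u}\leq \frac{n}{2t}+\sqrt{nKC},\qquad C=D_{\mu}\left[\psi'(1)\left(\psi^{-1}(\psi(1)D_{w})-1\right)+\psi(1)\right].$$
   Context: Graphs: $G=(V,E)$ is a connected, locally finite graph; each edge $xy$ carries a weight $w_{xy}>0$ (possibly asymmetric), and $\mu:V\to(0,\infty)$ is a vertex measure; $y\sim x$ means $xy\in E$, $\deg(x)=\sum_{y\sim x}w_{xy}<\infty$, $D_\mu=\sup_{x}\deg(x)/\mu(x)$, $D_w=\sup_{x\sim y}\deg(x)/w_{xy}$. Laplacian: $\Delta f(x)=\frac{1}{\mu(x)}\sum_{y\sim x}w_{xy}(f(y)-f(x))$. For $\psi:(0,\infty)\to\mathbb R$ and $f:V\to(0,\infty)$: $\Delta^\psi f(x)=\Delta\big[\psi\big(\tfrac{f}{f(x)}\big)\big](x)$; for $C^1$ $\psi$, $\overline\psi(s)=\psi'(1)(s-1)-(\psi(s)-\psi(1))$ and $\Gamma^\psi f=\Delta^{\overline\psi}f$; $(\Omega^\psi f)(x)=\Delta\big[\psi'\big(\tfrac{f}{f(x)}\big)\tfrac{f}{f(x)}\big(\tfrac{\Delta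 f}{f}-\tfrac{\Delta f(x)}{f(x)}\big)\big](x)$; $2\Gamma_2^\psi(f)=\Omega^\psi f+\frac{\Delta f\,\Delta^\psi f}{f}-\frac{\Delta(f\Delta^\psi f)}{f}$. The graph satisfies $CD\psi(n,K)$ if for every $f:V\to(0,\infty)$ and every vertex, $\Gamma_2^\psi(f)\ge\frac1n(\Delta^\psi f)^2+K\Gamma^\psi(f)$. $\psi^{-1}$ is the inverse function of $\psi$. A positive solution of the heat equation on $U\subset V$ is $u:V\times[0,\infty)\to(0,\infty)$, continuously differentiable in $t$, with $\partial_t u=\Delta u$ at every $x\in U$, $t\ge0$; operators are applied to $u(\cdot,t)$ at each fixed time. *)

(* Defs.v *)
From HB Require Import structures.
From mathcomp Require Import all_boot all_order all_algebra.
From mathcomp Require Import all_classical all_reals all_analysis.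
Set Implicit Arguments. Unset Strict Implicit. Unset Printing Implicit Defensive.
Import Order.TTheory GRing.Theory Num.Theory.
Import numFieldNormedType.Exports.
Local Open Scope classical_set_scope.
Local Open Scope ring_scope.

Section GraphOps.
Variables (R : realType) (V : finType) (adj : rel V) (w : V -> V -> R) (mu : V -> R).

Definition deg (x : V) : R := \sum_(y | adj x y) w x y.

Definition lap (f : V -> R) (x : V) : R :=
  (mu x)^-1 * \sum_(y | adj x y) w x y * (f y - f x).

Definition lap_psi (psi : R -> R) (f : V -> R) (x : V) : R :=
  lap (fun y => psi (f y / f x)) x.

Definition psibar (psi : R -> R) (s : R) : R :=
  derive1 psi 1 * (s - 1) - (psi s - psi 1).

Definition Gamma_psi (psi : R -> R) (f : V -> R) (x : V) : R :=
  lap_psi (psibar psi) f x.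

Definition Omega_psi (psi : R -> R) (f : V -> R) (x : V) : R :=
  lap (fun y => derive1 psi (f y / f x) * (f y / f x)
                * (lap f y / f y - lap f x / f x)) x.

Definition Gamma2_psi (psi : R -> R) (f : V -> R) (x : V) : R :=
  (Omega_psi psi f x + lap f x * lap_psi psi f x / f x
   - lap (fun y => f y * lap_psi psi f y) x / f x) / 2.

Definition CD_psi (psi : R -> R) (n K : R) : Prop :=
  forall f : V -> R, (forall y, 0 < f y) ->
  forall x, n^-1 * (lap_psi psi f x) ^+ 2 + K * Gamma_psi psi f x
            <= Gamma2_psi psi f x.

(* D_mu = sup_x deg(x)/mu(x) (a max over the finite vertex set; all terms > 0) *)
Definition D_mu : R := \big[Num.max/0]_(x : V) (deg x / mu x).

(* D_w = sup_{x ~ y} deg(x)/w_xy (all terms > 0; 0 if there are no edges) *)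
Definition D_w : R :=
  \big[Num.max/0]_(x : V) \big[Num.max/0]_(y | adj x y) (deg x / w x y).

(* finite connected simple graph with positive (possibly asymmetric)
   edge weights and positive vertex measure *)
Definition weighted_graph : Prop :=
  [/\ symmetric adj, irreflexive adj, (forall x y, connect adj x y),
      (forall x y, adj x y -> 0 < w x y) & (forall x, 0 < mu x)].

Definition heat_solution (u : V -> R -> R) : Prop :=
  [/\ (forall x t, 0 <= t -> 0 < u x t),
      (forall x, {within `[0, +oo[, continuous (u x)}),
      (forall x t, 0 < t -> derivable (u x) t 1),
      (forall x t, 0 < t -> {for t, continuous (derive1 (u x))}) &
      (forall x t, 0 < t -> derive1 (u x) t = lap (fun y => u y t) x)].

End GraphOps.

Definition psi_admissible (R : realType) (psi : R -> R) : Prop :=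
  [/\ (forall x, 0 < x -> derivable psi x 1),
      (forall x, 0 < x -> {for x, continuous (derive1 psi)}),
      (forall x, 0 < x -> 0 < psi x),
      (forall x, 0 < x -> 0 < derive1 psi x) &
      (forall x y a, 0 < x -> 0 < y -> 0 <= a <= 1 ->
         a * psi x + (1 - a) * psi y <= psi (a * x + (1 - a) * y))].

(* Main.v *)
Require Import Defs.
From HB Require Import structures.
From mathcomp Require Import all_boot all_order all_algebra.
From mathcomp Require Import all_classical all_reals all_analysis.
Import Order.TTheory GRing.Theory Num.Theory.
Import numFieldNormedType.Exports.
Local Open Scope classical_set_scope.
Local Open Scope ring_scope.
From mathcomp Require Import ring lra.
Set Implicit Arguments. Unset Strict Implicit. Unset Printing Implicit Defensive.
Section Gen.
Variable R : realType.

Lemma is_derive_big (I : Type) (r : seq I) (P : pred I) (h : I -> R -> R)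
  (dh : I -> R) (x : R) :
  (forall i, P i -> is_derive x 1 (h i) (dh i)) ->
  is_derive x 1 (fun t => \sum_(i <- r | P i) h i t) (\sum_(i <- r | P i) dh i).
Proof.
move=> H; elim: r => [|a r IH].
  have -> : (fun t => \sum_(i <- [::] | P i) h i t) = cst 0.
    by apply/funext => t; rewrite big_nil.
  by rewrite big_nil; exact: is_derive_cst.
rewrite big_cons; case Pa: (P a).
  have -> : (fun t => \sum_(i <- a :: r | P i) h i t) =
     (h a + (fun t => \sum_(i <- r | P i) h i t)).
    by apply/funext => t; rewrite big_cons Pa.
  by apply: is_deriveD => //; exact: H.
have -> : (fun t => \sum_(i <- a :: r | P i) h i t) =
     (fun t => \sum_(i <- r | P i) h i t).
  by apply/funext => t; rewrite big_cons Pa.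
exact: IH.
Qed.

Lemma cvg_big (T : Type) (F : set_system T) (FF : Filter F) (I : Type)
  (r : seq I) (P : pred I) (h : I -> T -> R) (l : I -> R) :
  (forall i, P i -> h i t @[t --> F] --> l i) ->
  (\sum_(i <- r | P i) h i t) @[t --> F] --> \sum_(i <- r | P i) l i.
Proof.
move=> H; elim: r => [|a r IH].
  under eq_fun do rewrite big_nil. rewrite big_nil; exact: cvg_cst.
rewrite big_cons; case Pa: (P a).
  under eq_fun do rewrite big_cons Pa.
  by apply: cvgD => //; exact: H.
by under eq_fun do rewrite big_cons Pa.
Qed.

Lemma is_derive_comp1 (f g : R -> R) x :
  derivable f x 1 -> derivable g (f x) 1 ->
  is_derive x 1 (g \o f) (derive1 g (f x) * derive1 f x).
Proof.
move=> df dg; apply: DeriveDef.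
  apply/derivable1_diffP/differentiable_comp; first exact/derivable1_diffP.
  exact/derivable1_diffP.
by rewrite -derive1E derive1_comp.
Qed.

Lemma derive1_left_min (f : R -> R) (a c : R) :
  a < c -> derivable f c 1 -> (forall t, a < t < c -> f c <= f t) ->
  derive1 f c <= 0.
Proof.
move=> ac fd cmin; rewrite derive1E.
rewrite ['D_1 f c]cvg_at_leftE; last exact: fd.
apply: limr_le.
  rewrite -(cvg_at_leftE (fun h => h^-1 *: ((f \o shift c) _ - f c))) //.
  apply: cvg_trans fd; apply: cvg_app.
  move=> A [e egt0 Ae]; exists e => // x xe xgt0; apply: Ae => //.
  exact/ltr0_neq0.
near=> h; apply: mulr_le0_ge0.
  by rewrite invr_le0; apply: ltW; near: h; exists 1 => /=.
rewrite subr_ge0 [_%:A]mulr1; apply: cmin; near: h.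
exists (c - a); first by rewrite /= subr_gt0.
move=> h; rewrite /= distrC subr0.
move=> /ltr_normlP []; rewrite ltrBrDl ltrBlDl => -> _.
by move=> h0; rewrite gtrDr.
Unshelve. all: by end_near. Qed.

Lemma deriv_pos_incr (f : R -> R) x y :
  (forall z, 0 < z -> derivable f z 1) -> (forall z, 0 < z -> 0 < derive1 f z) ->
  0 < x -> x < y -> f x < f y.
Proof.
move=> df dpos x0 xy.
apply: (@gtr0_derive1_incr _ f x y) => //.
- move=> z; rewrite in_itv /= => /andP[xz _]; apply: df; exact: lt_trans xz.
- move=> z; rewrite in_itv /= => /andP[xz _]; apply: dpos; exact: lt_trans xz.
- apply: derivable_within_continuous => z; rewrite in_itv /= => /andP[xz _].
  apply: df; exact: lt_le_trans xz.
Qed.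

End Gen.
Lemma fin_argmin (R : realType) (T : finType) (F : T -> R) (x0 : T) :
  exists x1, forall x, F x1 <= F x.
Proof.
case: (@arg_minP _ _ T x0 xpredT F erefl) => i _ H; exists i => x; exact: H.
Qed.

Lemma final_arith (R : realType) (n K C a t L : R) : 0 < n -> 0 < K -> 0 <= C ->
  0 <= a -> a ^+ 2 = n * K * C -> 0 < t ->
  t * L + (n / 2 + a * t) < 0 ->
  L + a + 2 * t * L ^+ 2 / n - 2 * t * K * C <= 0 -> False.
Proof.
move=> n0 K0 C0 a0 aE t0 H1 H2.
have [Q QE] : exists Q, Q = - (t * L) by exists (- (t * L)).
have [A AE] : exists A, A = a * t by exists (a * t).
have A0 : 0 <= A by rewrite AE mulr_ge0 // ltW.
have HQ : n / 2 + A < Q by rewrite QE AE; lra.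
have H3 : 2 * Q ^+ 2 - n * Q + n * A - 2 * A ^+ 2 <= 0.
  have := H2; rewrite -(pmulr_rle0 _ (mulr_gt0 n0 (mulr_gt0 t0 t0))).
  have -> : n * (t * t) * (L + a + 2 * t * L ^+ 2 / n - 2 * t * K * C) =
    2 * Q ^+ 2 * t - n * Q * t + n * A * t - 2 * A ^+ 2 * t.
    rewrite QE AE; have -> : C = a ^+ 2 / (n * K) by rewrite aE; field; apply/andP; split; lra.
    field; apply/andP; split; lra.
  move=> h; rewrite -(pmulr_rle0 _ t0); lra.
have H4 : 0 < (Q - (n / 2 + A)) * (2 * Q - n) by apply: mulr_gt0; lra.
have H5 : 0 <= (n / 2 + A) * (2 * Q - n - 2 * A) by apply: mulr_ge0; lra.
have H6 : 0 <= n * A by apply: mulr_ge0 => //; lra.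
nra.
Qed.
Section Graph.
Variables (R : realType) (V : finType) (adj : rel V) (w : V -> V -> R) (mu : V -> R)
  (psi : R -> R) (u : V -> R -> R).
Hypothesis psi_d : forall x, 0 < x -> derivable psi x 1.
Hypothesis u_pos : forall x t, 0 <= t -> 0 < u x t.
Hypothesis u_d : forall x t, 0 < t -> derivable (u x) t 1.
Hypothesis u_heat : forall x t, 0 < t -> derive1 (u x) t = lap adj w mu (fun y => u y t) x.

Lemma scRE (a b : R) : a *: b = a * b. Proof. by []. Qed.

Lemma is_derive_ratio (a b : R -> R) t da db :
  b t != 0 -> is_derive t 1 a da -> is_derive t 1 b db ->
  is_derive t 1 (fun s => a s / b s) (da / b t - a t * db / (b t ^+ 2)).
Proof.
move=> bt0 Ha Hb.
have H := is_deriveM Ha (is_deriveV bt0 Hb).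
have -> : (fun s => a s / b s) = a * (fun y => (b y)^-1) by [].
apply: (is_derive_eq H).
rewrite !scRE; field; exact: bt0.
Qed.


Lemma is_derive_psi_ratio (y x : V) (t : R) : 0 < t ->
  is_derive t 1 (fun s => psi (u y s / u x s))
   (derive1 psi (u y t / u x t) *
     (derive1 (u y) t / u x t - u y t * derive1 (u x) t / (u x t ^+ 2))).
Proof.
move=> t0.
have ux0 : u x t != 0 by rewrite gt_eqF // u_pos // ltW.
have Hr := is_derive_ratio ux0 (derivableP (@u_d y t t0)) (derivableP (@u_d x t t0)).
have -> : (fun s => psi (u y s / u x s)) = psi \o (fun s => u y s / u x s) by [].
apply: is_derive_eq.
  apply: is_derive_comp1; first by case: Hr.
  by apply: psi_d; rewrite divr_gt0 // u_pos // ltW.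
rewrite /= !derive1E; congr (_ * _); exact: (@derive_val _ _ _ _ _ _ _ Hr).
Qed.

Definition Lf (x : V) (t : R) := lap_psi adj w mu psi (fun y => u y t) x.

Lemma is_derive_L (x : V) (t : R) : 0 < t ->
  is_derive t 1 (Lf x) (Omega_psi adj w mu psi (fun y => u y t) x).
Proof.
move=> t0.
have H := is_deriveZ ((mu x)^-1) (@is_derive_big R V (index_enum V) (adj x) _ _ t
  (fun y _ => is_deriveZ (w x y) (is_deriveB (is_derive_psi_ratio y x t0)
                                           (is_derive_psi_ratio x x t0)))).
apply: (is_derive_eq H).
rewrite /Omega_psi {1}/lap scRE; congr (_ * _); apply: eq_bigr => y _.
have ux0 : u x t != 0 by rewrite gt_eqF // u_pos // ltW.
have uy0 : u y t != 0 by rewrite gt_eqF // u_pos // ltW.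
rewrite !scRE !u_heat // divff // subrr mulr0 subr0; congr (_ * _).
field; by apply/andP.
Qed.

Lemma Gamma_id (f : V -> R) (x : V) : f x != 0 ->
  Gamma_psi adj w mu psi f x =
  derive1 psi 1 * (lap adj w mu f x / f x) - lap_psi adj w mu psi f x.
Proof.
move=> fx0; rewrite /Gamma_psi /lap_psi /lap /psibar divff //.
rewrite !subrr mulr0 subr0.
set S1 := \sum_(y | adj x y) w x y * (f y - f x).
set S2 := \sum_(y | adj x y) w x y * (psi (f y / f x) - psi 1).
set c := derive1 psi 1.
have -> : c * ((mu x)^-1 * S1 / f x) - (mu x)^-1 * S2 =
   (mu x)^-1 * (c / f x * S1 - S2) by ring.
congr (_ * _).
rewrite /S1 /S2 mulr_sumr -sumrB; apply: eq_bigr => y _.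
field; exact: fx0.
Qed.

Lemma Dw_ge (x y : V) : adj x y -> deg adj w x / w x y <= D_w adj w.
Proof.
move=> xy; apply: le_trans (le_bigmax _ _ x).
exact: (le_bigmax_cond _ (fun y => deg adj w x / w x y) xy).
Qed.

Lemma Dmu_ge (x : V) : deg adj w x / mu x <= D_mu adj w mu.
Proof. exact: (le_bigmax _ (fun x => deg adj w x / mu x) x). Qed.

Hypothesis psi_pos : forall x, 0 < x -> 0 < psi x.
Hypothesis dpsi_pos : forall x, 0 < x -> 0 < derive1 psi x.

Lemma Gamma_le (f : V -> R) (x : V) (s0 : R) :
  (forall y, 0 < f y) -> 0 < s0 -> psi s0 = psi 1 * D_w adj w ->
  (forall y, adj x y -> 0 < w x y) -> 0 < mu x ->
  0 <= derive1 psi 1 * (s0 - 1) + psi 1 ->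
  lap_psi adj w mu psi f x <= 0 ->
  Gamma_psi adj w mu psi f x <= D_mu adj w mu * (derive1 psi 1 * (s0 - 1) + psi 1).
Proof.
move=> fpos s0pos psis wpos mupos c0pos L0.
have fx0 : f x != 0 by rewrite gt_eqF.
set c0 := derive1 psi 1 * (s0 - 1) + psi 1.
have psi1 : 0 < psi 1 by apply: psi_pos.
have dpsi1 : 0 < derive1 psi 1 by apply: dpsi_pos.
have Sle : \sum_(y | adj x y) w x y * psi (f y / f x) <= psi 1 * deg adj w x.
  move: L0; rewrite /lap_psi /lap divff // pmulr_rle0 ?invr_gt0 //.
  rewrite /deg mulr_sumr.
  under eq_bigr do rewrite mulrBr.
  by rewrite sumrB subr_le0; under [X in _ <= X -> _]eq_bigr do rewrite mulrC.
have rle : forall y, adj x y -> f y / f x <= s0.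
  move=> y xy; rewrite leNgt; apply/negP => /(deriv_pos_incr psi_d dpsi_pos s0pos).
  apply/negP; rewrite -leNgt psis.
  have wy := wpos y xy.
  have : w x y * psi (f y / f x) <= psi 1 * deg adj w x.
    apply: le_trans Sle; rewrite (bigD1 y) //= lerDl.
    apply: sumr_ge0 => z /andP[xz _]; apply: mulr_ge0; first exact/ltW/wpos.
    by apply/ltW/psi_pos; rewrite divr_gt0.
  rewrite -ler_pdivlMl // => H; apply: (le_trans H).
  rewrite mulrC -mulrA ler_pM2l //; exact: Dw_ge.
rewrite /Gamma_psi /lap_psi /lap /psibar divff // !subrr mulr0 subr0.
apply: (@le_trans _ _ ((mu x)^-1 * (deg adj w x * c0))).
  rewrite ler_pM2l ?invr_gt0 // /deg mulr_suml; apply: ler_sum => y xy.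
  rewrite subr0 ler_pM2l ?wpos // /c0.
  have r0 : 0 < f y / f x by rewrite divr_gt0.
  have := psi_pos r0; have := rle y xy.
  move=> h1 h2.
  have : derive1 psi 1 * (f y / f x - 1) <= derive1 psi 1 * (s0 - 1).
    by rewrite ler_pM2l // lerD2r.
  lra.
rewrite mulrA mulrC [_ * deg _ _ _]mulrC; rewrite (mulrC c0).
by apply: ler_wpM2r => //; exact: Dmu_ge.
Qed.

Definition gfun (c a : R) (x : V) (s : R) :=
  s * (u x s * Lf x s) + u x s * (c + a * s).

Lemma is_derive_g (c a : R) (x : V) (t : R) : 0 < t ->
  is_derive t 1 (gfun c a x)
   (u x t * Lf x t + t * (derive1 (u x) t * Lf x t
       + u x t * Omega_psi adj w mu psi (fun y => u y t) x)
    + derive1 (u x) t * (c + a * t) + u x t * a).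
Proof.
move=> t0.
have Hu := derivableP (@u_d x t t0).
have H1 := is_deriveM (is_derive_id t 1) (is_deriveM Hu (is_derive_L x t0)).
have H2 := is_deriveM Hu (is_deriveD (is_derive_cst c t 1)
                            (is_deriveZ a (is_derive_id t 1))).
have H := is_deriveD H1 H2.
have -> : gfun c a x = (id * (u x * Lf x)) + (u x * (cst c + a \*: id)) by [].
apply: (is_derive_eq H).
have -> : (u x * Lf x) t = u x t * Lf x t by [].
have -> : (cst c + a \*: id) t = c + a * t by [].
rewrite !derive1E /= !scRE; ring.
Qed.

Hypothesis u_cont : forall x, {within `[0, +oo[, continuous (u x)}.

Lemma u_right0 (x : V) : u x t @[t --> 0^'+] --> u x 0.
Proof.
have : {within `[0, 1], continuous (u x)}.
  have K := @continuous_subspaceW _ _ _ _ (u x) _ (@u_cont x).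
  apply: K => z /=; rewrite !in_itv /=.
  by case/andP => ->.
by case/(continuous_within_itvP _ ltr01).
Qed.

Lemma psi_cont (r : R) : 0 < r -> {for r, continuous psi}.
Proof.
move=> r0; apply: differentiable_continuous; rewrite -derivable1_diffP.
exact: psi_d.
Qed.

Lemma ratio_right0 (y x : V) :
  psi (u y t / u x t) @[t --> 0^'+] --> psi (u y 0 / u x 0).
Proof.
have ux0 : u x 0 != 0 by rewrite gt_eqF // u_pos.
apply: (@continuous_cvg _ _ _ _ _ (fun t => u y t / u x t) psi).
  by apply: psi_cont; rewrite divr_gt0 // u_pos.
apply: cvgM; first exact: u_right0.
exact: cvgV (@u_right0 x).
Qed.

Lemma g_right0 (c a : R) (x : V) : gfun c a x t @[t --> 0^'+] --> gfun c a x 0.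
Proof.
have t0 : (t : R) @[t --> 0^'+] --> (0 : R).
  by apply: cvg_at_right_filter; exact: cvg_id.
rewrite /gfun /Lf /lap_psi /lap.
apply: cvgD; apply: cvgM => //.
  apply: cvgM; first exact: u_right0.
  apply: cvgM; first exact: cvg_cst.
  apply: cvg_big => y _; apply: cvgM; first exact: cvg_cst.
  by apply: cvgB; exact: ratio_right0.
  exact: u_right0.
apply: cvgD; first exact: cvg_cst.
by apply: cvgM => //; exact: cvg_cst.
Qed.

Lemma g_contT (c a : R) (x : V) (t : R) : 0 < t -> {for t, continuous (gfun c a x)}.
Proof.
move=> t0; have H := is_derive_g c a x t0.
apply: differentiable_continuous; rewrite -derivable1_diffP; by case: H.
Qed.

Lemma g_cont (c a : R) (x : V) (T : R) : 0 < T ->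
  {within `[0, T], continuous (gfun c a x)}.
Proof.
move=> T0; apply/continuous_within_itvP => //; split.
- move=> t; rewrite in_itv /= => /andP[t0 _]; exact: g_contT.
- exact: g_right0.
- apply: cvg_at_left_filter; exact: g_contT.
Qed.
Lemma lap_lin (al be : R) (f h : V -> R) (x : V) :
  lap adj w mu (fun y => al * f y + h y * be) x =
  al * lap adj w mu f x + be * lap adj w mu h x.
Proof.
rewrite /lap mulrCA [be * _]mulrCA -mulrDr; congr (_ * _).
rewrite !mulr_sumr -big_split; apply: eq_bigr => y _ /=; ring.
Qed.
End Graph.
Unset Implicit Arguments. Set Strict Implicit.
Theorem mainTheorem6 (R : realType) (V : finType) (adj : rel V)
  (w : V -> V -> R) (mu : V -> R) (psi : R -> R) (n K : R)
  (u : V -> R -> R) (s : R) :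
  weighted_graph adj w mu ->
  0 < n -> 0 < K ->
  psi_admissible psi ->
  (* s = psi^{-1}(psi(1) D_w) *)
  0 < s -> psi s = psi 1 * D_w adj w ->
  CD_psi adj w mu psi n (- K) ->
  heat_solution adj w mu u ->
  forall (x : V) (t : R), 0 < t ->
    Gamma_psi adj w mu psi (fun y => u y t) x
      - derive1 psi 1 * (derive1 (u x) t / u x t)
    <= n / (2 * t)
       + Num.sqrt (n * K * (D_mu adj w mu * (derive1 psi 1 * (s - 1) + psi 1))).
Proof.
move=> [adj_sym adj_irr adj_conn wpos mupos] n0 K0
  [psi_d psi_c psi_pos dpsi_pos psi_conc] s0 psis CD
  [u_pos u_cont u_d u_dc u_heat] x0 T T0.
have psi1 : 0 < psi 1 by apply: psi_pos.
have dpsi1 : 0 < derive1 psi 1 by apply: dpsi_pos.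
have c0pos : 0 <= derive1 psi 1 * (s - 1) + psi 1.
  case: (pselect (exists x y, adj x y)) => [[x [y xy]] | noe].
    have wy := wpos x y xy.
    have dge : w x y <= deg adj w x.
      rewrite /deg (bigD1 y) //= lerDl; apply: sumr_ge0 => z /andP[xz _].
      exact/ltW/wpos.
    have Dw1 : 1 <= D_w adj w.
      apply: le_trans (Dw_ge w xy); by rewrite ler_pdivlMr // mul1r.
    have s1 : 1 <= s.
      rewrite leNgt; apply/negP => s1.
      have := deriv_pos_incr psi_d dpsi_pos s0 s1.
      rewrite psis => h.
      have : psi 1 * 1 <= psi 1 * D_w adj w by rewrite ler_pM2l.
      lra.
    have : 0 <= derive1 psi 1 * (s - 1) by rewrite mulr_ge0 // ?subr_ge0 // ltW.
    lra.
  exfalso.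
  have Dw0 : D_w adj w = 0.
    rewrite /D_w; elim/big_ind: _ => //[x' y' -> ->|x _]; first by rewrite maxxx.
    elim/big_ind: _ => //[x' y' -> ->|y xy]; first by rewrite maxxx.
    by exfalso; apply: noe; exists x, y.
  by move: (psi_pos s s0); rewrite psis Dw0 mulr0 ltxx.
set C := D_mu adj w mu * (derive1 psi 1 * (s - 1) + psi 1).
have C0 : 0 <= C.
  apply: mulr_ge0 => //; exact: bigmax_ge_id.
set a := Num.sqrt (n * K * C).
have a0 : 0 <= a := sqrtr_ge0 _.
have aE : a ^+ 2 = n * K * C.
  by rewrite sqr_sqrtr // mulr_ge0 // mulr_ge0 // ltW.
have ux : forall x t, 0 <= t -> u x t != 0.
  by move=> x t t0; rewrite gt_eqF // u_pos.
rewrite leNgt; apply/negP => Hbad.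
have Lx0 : Lf adj w mu psi u x0 T < - (n / (2 * T) + a).
  move: Hbad; rewrite Gamma_id ?ux ?ltW // u_heat // /Lf. lra.
set g := gfun adj w mu psi u (n / 2) a.
have gx0 : g x0 T < 0.
  have U0 := u_pos x0 T (ltW T0).
  have : u x0 T * T * (Lf adj w mu psi u x0 T + (n / (2 * T) + a)) < 0.
    by rewrite pmulr_rlt0 ?mulr_gt0 //; lra.
  have -> : g x0 T = u x0 T * T * (Lf adj w mu psi u x0 T + (n / (2 * T) + a)).
    by rewrite /g /gfun; field; lra.
  by [].
have ex : forall x, exists c, c \in `[0, T] /\ forall t, t \in `[0, T] -> g x c <= g x t.
  move=> x.
  have [c ? ?] := EVT_min (ltW T0) (@g_cont _ _ _ _ _ _ _ psi_d u_pos u_d u_heat u_cont (n / 2) a x T T0).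
  by exists c.
have [cf Hcf] := boolp.choice ex.
have [x1 Hx1] := fin_argmin (fun x => g x (cf x)) x0.
set t1 := cf x1.
have gmin : forall x t, t \in `[0, T] -> g x1 t1 <= g x t.
  move=> x t tT; apply: le_trans (Hx1 x) _; exact: (Hcf x).2.
have t1T : t1 \in `[0, T] := (Hcf x1).1.
have g1neg : g x1 t1 < 0.
  apply: le_lt_trans (gmin x0 T _) gx0; by rewrite in_itv /= (ltW T0) lexx.
have t1ge0 : 0 <= t1 by move: t1T; rewrite in_itv /= => /andP[].
have t1leT : t1 <= T by move: t1T; rewrite in_itv /= => /andP[].
have t1pos : 0 < t1.
  rewrite lt_def t1ge0 andbT; apply/eqP => t10.
  move: g1neg; rewrite -/t1 t10 /g /gfun mul0r add0r mulr0 addr0.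
  have := u_pos x1 0 (lexx 0); move=> h1 h2.
  have : 0 < u x1 0 * (n / 2) by rewrite mulr_gt0 // divr_gt0.
  lra.
set U := u x1 t1.
set L := Lf adj w mu psi u x1 t1.
set Du := lap adj w mu (fun y => u y t1) x1.
set Om := Omega_psi adj w mu psi (fun y => u y t1) x1.
set DuL := lap adj w mu (fun y => u y t1 * Lf adj w mu psi u y t1) x1.
have U0 : 0 < U by apply: u_pos.
have Hd := is_derive_g psi_d u_pos u_d u_heat (n / 2) a x1 t1pos.
have dle : derive1 (g x1) t1 <= 0.
  apply: (@derive1_left_min _ _ 0 t1 t1pos); first by case: Hd => H _; exact: H.
  move=> t /andP[t0 tt1]; apply: gmin.
  by rewrite in_itv /= (ltW t0) (le_trans (ltW tt1) t1leT).
have Dval : derive1 (g x1) t1 = U * L + t1 * (Du * L + U * Om) + Du * (n / 2 + a * t1) + U * a.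
  rewrite /Du -u_heat // {1}derive1E; exact: (@derive_val _ _ _ _ _ _ _ Hd).
have lapg : 0 <= lap adj w mu (fun y => g y t1) x1.
  rewrite /lap; apply: mulr_ge0; first by rewrite invr_ge0 ltW.
  apply: sumr_ge0 => y xy.
  apply: mulr_ge0; first exact/ltW/wpos.
  by rewrite subr_ge0; apply: gmin.
have lapg_eq : lap adj w mu (fun y => g y t1) x1 = t1 * DuL + (n / 2 + a * t1) * Du.
  exact: lap_lin.
have Lneg : L < 0.
  move: g1neg; rewrite /g /gfun -/U -/L => h.
  have n2 : 0 < n / 2 by rewrite divr_gt0.
  have at0 : 0 <= a * t1 by rewrite mulr_ge0 // ltW.
  have : 0 < U * (n / 2 + a * t1) by rewrite mulr_gt0 //; lra.
  move=> h2; have : t1 * (U * L) < 0 by lra.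
  by rewrite pmulr_rlt0 // pmulr_rlt0.
have HCD := CD (fun y => u y t1) (fun y => u_pos y t1 t1ge0) x1.
have HG := @Gamma_le _ _ _ _ _ _ psi_d psi_pos dpsi_pos (fun y => u y t1) x1 s (fun y => u_pos y t1 t1ge0) s0 psis
  (wpos x1) (mupos x1) c0pos (ltW Lneg).
rewrite -/C in HG.
rewrite /Gamma2_psi -/Om -/Du in HCD.
change (lap adj w mu (fun y => u y t1 * lap_psi adj w mu psi (fun y0 => u y0 t1) y) x1) with DuL in HCD.
change (lap_psi adj w mu psi (fun y => u y t1) x1) with L in HCD.
change (lap_psi adj w mu psi (fun y => u y t1) x1) with L in HG.
rewrite -/U in HCD.
set G := Gamma_psi adj w mu psi (fun y => u y t1) x1 in HCD HG.
apply: (final_arith n0 K0 C0 a0 aE t1pos (L := L)).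
  move: g1neg; rewrite /g /gfun -/U -/L => h.
  rewrite -(pmulr_rlt0 _ U0); have -> : U * (t1 * L + (n / 2 + a * t1)) = t1 * (U * L) + U * (n / 2 + a * t1) by ring.
  exact: h.
have HCD' : 2 * U * (L ^+ 2 / n) - 2 * U * K * G <= U * Om + Du * L - DuL.
  have := HCD; rewrite -(ler_pM2l (_ : 0 < 2 * U)); last by rewrite mulr_gt0.
  have -> : 2 * U * ((Om + Du * L / U - DuL / U) / 2) = U * Om + Du * L - DuL.
    by field; rewrite gt_eqF.
  have -> : 2 * U * (n^-1 * L ^+ 2 + - K * G) = 2 * U * (L ^+ 2 / n) - 2 * U * K * G by ring.
  by [].
have h1 : t1 * (2 * U * (L ^+ 2 / n) - 2 * U * K * G) <= t1 * (U * Om + Du * L - DuL).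
  by rewrite ler_pM2l.
have h2 : t1 * (2 * U * K * G) <= t1 * (2 * U * K * C).
  by rewrite ler_pM2l // ler_pM2l // !mulr_gt0.
have key : U * (L + a + 2 * t1 * L ^+ 2 / n - 2 * t1 * K * C) <= 0.
  move: dle lapg; rewrite Dval lapg_eq => d1 d2.
  have -> : U * (L + a + 2 * t1 * L ^+ 2 / n - 2 * t1 * K * C) =
    U * L + U * a + t1 * (2 * U * (L ^+ 2 / n) - 2 * U * K * G)
     + (t1 * (2 * U * K * G) - t1 * (2 * U * K * C)) by ring.
  have e3 : U * L + t1 * (Du * L + U * Om) + Du * (n / 2 + a * t1) + U * a
     - (t1 * DuL + (n / 2 + a * t1) * Du) = U * L + U * a + t1 * (U * Om + Du * L - DuL) by ring.
  lra.
by move: key; rewrite pmulr_rle0.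
Qed.
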